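(* Consider a human–algorithm system (as defined in the context). Let $i^+\in\arg\max_i c(a_i,h_i)$ and $i^-\in\arg\min_i c(a_i,h_i)$. Let $\epsilon_a=\max_i a_i-\min_i a_i$, $\epsilon_h=\max_i h_i-\min_i h_i$ and $\epsilon_c=c(a_{i^+},h_{i^+})-c(a_{i^-},h_{i^-})$ be the loss disparities of the algorithm, the unaided human, and the combined system. If either (i) $h_{i^+}\le a_{i^+}$ and $h_{i^-}\ge a_{i^-}$, or (ii) $h_{i^+}\ge a_{i^+}$ and $h_{i^-}\le a_{i^-}$, then $\epsilon_c\le\max(\epsilon_a,\epsilon_h)$.
   Context: A human–algorithm system consists of: an integer $N\ge1$ (number of regimes); probabilities $p_1,\dots,p_N\ge 0$ with $\sum_i p_i=1$; algorithmic losses $a_1,\dots,a_N\ge 0$ and unaided-human losses $h_1,\dots,h_N\ge0$; and a combining function $c:[0,\infty)^2\to\mathbb{R}$ satisfying $\min(a,h)\le c(a,h)\le\max(a,h)$ for all $a,h\ge0$, where $c(a_i,h_i)$ is the loss of the combined system in regime $i$. *)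

(* Defs.v *)
From mathcomp Require Import all_boot all_order all_algebra.
Set Implicit Arguments. Unset Strict Implicit. Unset Printing Implicit Defensive.
Import Order.TTheory GRing.Theory Num.Theory.
Local Open Scope ring_scope.

Definition maxI (R : realDomainType) (n : nat) (f : 'I_n.+1 -> R) : R :=
  \big[Num.max/f ord0]_(i < n.+1) f i.
Definition minI (R : realDomainType) (n : nat) (f : 'I_n.+1 -> R) : R :=
  \big[Num.min/f ord0]_(i < n.+1) f i.

Record is_system (R : realDomainType) (n : nat) (p a h : 'I_n.+1 -> R)
    (c : R -> R -> R) : Prop := {
  sys_p_ge0 : forall i, 0 <= p i;
  sys_p_sum : \sum_(i < n.+1) p i = 1;
  sys_a_ge0 : forall i, 0 <= a i;
  sys_h_ge0 : forall i, 0 <= h i;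
  sys_c_bounds : forall x y : R, 0 <= x -> 0 <= y ->
      Num.min x y <= c x y /\ c x y <= Num.max x y
}.

(* Main.v *)
Require Import Defs.
From mathcomp Require Import all_boot all_order all_algebra.
Import Order.TTheory GRing.Theory Num.Theory.
Local Open Scope ring_scope.

Lemma le_maxseq (R : realDomainType) (T : eqType) (f : T -> R) x0 (r : seq T) x :
  x \in r -> f x <= \big[Num.max/x0]_(j <- r) f j.
Proof.
elim: r => [//|y r IH]; rewrite inE big_cons => /orP [/eqP ->|/IH H].
  by rewrite le_max lexx.
by rewrite le_max H orbT.
Qed.

Lemma ge_minseq (R : realDomainType) (T : eqType) (f : T -> R) x0 (r : seq T) x :
  x \in r -> \big[Num.min/x0]_(j <- r) f j <= f x.
Proof.
elim: r => [//|y r IH]; rewrite inE big_cons => /orP [/eqP ->|/IH H].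
  by rewrite ge_min lexx.
by rewrite ge_min H orbT.
Qed.

Lemma le_maxI (R : realDomainType) n (f : 'I_n.+1 -> R) i : f i <= maxI f.
Proof. exact: le_maxseq (mem_index_enum i). Qed.

Lemma ge_minI (R : realDomainType) n (f : 'I_n.+1 -> R) i : minI f <= f i.
Proof. exact: ge_minseq (mem_index_enum i). Qed.

Theorem lemma10 (R : realFieldType) (n : nat) (p a h : 'I_n.+1 -> R)
    (c : R -> R -> R) (ip im : 'I_n.+1) :
  is_system p a h c ->
  (forall i, c (a i) (h i) <= c (a ip) (h ip)) ->
  (forall i, c (a im) (h im) <= c (a i) (h i)) ->
  ((h ip <= a ip /\ a im <= h im) \/ (a ip <= h ip /\ h im <= a im)) ->
  c (a ip) (h ip) - c (a im) (h im)
    <= Num.max (maxI a - minI a) (maxI h - minI h).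
Proof.
move=> [_ _ a0 h0 cb] _ _.
have [_ Hp] := cb _ _ (a0 ip) (h0 ip).
have [Hm _] := cb _ _ (a0 im) (h0 im).
have := le_maxI _ _ a ip; have := ge_minI _ _ a im.
have := le_maxI _ _ h ip; have := ge_minI _ _ h im.
move=> h1 h2 a1 a2 [[H1 H2]|[H1 H2]].
- move: Hp Hm; rewrite (max_idPl H1) (min_idPl H2) => Hp Hm.
  rewrite le_max; apply/orP; left; apply: lerB.
    exact: le_trans Hp a2.
  exact: le_trans a1 Hm.
- move: Hp Hm; rewrite (max_idPr H1) (min_idPr H2) => Hp Hm.
  rewrite le_max; apply/orP; right; apply: lerB.
    exact: le_trans Hp h2.
  exact: le_trans h1 Hm.
Qed.
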